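(* Under the standing assumptions, let $t$ be a task of type 2 with intermediate task $i$ with respect to a demand vector $\vec v$, and suppose $\vec v$ has at least one unit of demand in each of two tasks $s_1,s_2$, both distinct from $t$ and $i$. Let $\vec v'$ be the demand vector such that $(\vec v,\vec v')$ is $(i,t)$-adjacent. Then $(\vec v,\vec v')$ has switching cost $1$.
   Context: Standing assumptions: $n\ge 4$, $k\ge 5$, and $f_1,\dots,f_n$ are functions from demand vectors to $[k]$ satisfying the demand (for every demand vector $\vec v$ and task $j$, exactly $v_j$ agents $a$ have $f_a(\vec v)=j$), with maximum switching cost at most $2$. A demand vector is $\vec v=(v_1,\dots,v_k)$ of non-negative integers with $\sum v_j=n$; task $j$ is non-empty in $\vec v$ if $v_j\ge1$. The switching cost of $(\vec v,\vec v')$ is the number of agents $a$ with $f_a(\vec v)\ne f_a(\vec v')$; $\vec v,\vec v'$ are adjacent if $\|\vec v-\vec v'\|_1=2$. An ordered pair $(\vec v_1,\vec v_2)$ is $(s,t)$-adjacent if $s\ne t$ and $\vec v_2$ is obtained from $\vec v_1$ by moving one unit of demand from task $s$ to task $t$. Agent $a$ is $(i,j)$-mobile with respect to $(\vec v_1,\vec v_2)$ if $f_a(\vec v_1)=i$, $f_a(\vec v_2)=j$, $i\ne j$. If $(\vec v_1,\vec v_2)$ is $(s,t)$-adjacent with switching cost $2$, then there is a task $i\notin\{s,t\}$ such that one switching agent is $(s,i)$-mobile and the other is $(i,t)$-mobile; $i$ is called the intermediate task of $(\vec v_1,\vec v_2)$. A task $t$ is of type 1 with respect to $\vec v$ if for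 every task $s\ne t$ non-empty in $\vec v$, the $(s,t)$-adjacent pair starting at $\vec v$ has switching cost $1$. A task $t$ is of type 2 with respect to $\vec v$ if there exist a task $i$ and an agent $a$ such that for every task $s\notin\{i,t\}$ non-empty in $\vec v$, the $(s,t)$-adjacent pair starting at $\vec v$ has switching cost $2$, intermediate task $i$, and $(i,t)$-mobile agent $a$; then $i$ is the intermediate task of $t$ with respect to $\vec v$. *)

(* Defs.v *)
From mathcomp Require Import all_boot.
Set Implicit Arguments. Unset Strict Implicit. Unset Printing Implicit Defensive.

Definition dvec (k : nat) := {ffun 'I_k -> nat}.

Definition is_demand (n k : nat) (v : dvec k) : bool := \sum_(j < k) v j == n.

Definition alloc (n k : nat) := 'I_n -> dvec k -> 'I_k.

Definition satisfies_demand (n k : nat) (f : alloc n k) : Prop :=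
  forall v : dvec k, is_demand n v ->
    forall j : 'I_k, #|[set a : 'I_n | f a v == j]| = v j.

Definition sw_cost (n k : nat) (f : alloc n k) (v v' : dvec k) : nat :=
  #|[set a : 'I_n | f a v != f a v']|.

Definition l1dist (k : nat) (v v' : dvec k) : nat :=
  \sum_(j < k) (maxn (v j) (v' j) - minn (v j) (v' j)).

Definition adjacent (k : nat) (v v' : dvec k) : Prop := l1dist v v' = 2.

Definition max_sw_cost_le (n k : nat) (f : alloc n k) (c : nat) : Prop :=
  forall v v' : dvec k, is_demand n v -> is_demand n v' -> adjacent v v' ->
    sw_cost f v v' <= c.

Definition st_adjacent (k : nat) (s t : 'I_k) (v1 v2 : dvec k) : Prop :=
  s != t /\ 0 < v1 s /\ v2 s = (v1 s).-1 /\ v2 t = (v1 t).+1 /\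
  (forall j : 'I_k, j != s -> j != t -> v2 j = v1 j).

Definition mobile (n k : nat) (f : alloc n k) (a : 'I_n) (i j : 'I_k)
    (v1 v2 : dvec k) : Prop :=
  f a v1 = i /\ f a v2 = j /\ i != j.

Definition cost2_interm_by (n k : nat) (f : alloc n k) (s t i : 'I_k)
    (a : 'I_n) (v1 v2 : dvec k) : Prop :=
  sw_cost f v1 v2 = 2 /\ i != s /\ i != t /\
  (exists b : 'I_n, mobile f b s i v1 v2) /\ mobile f a i t v1 v2.

Definition type2_with (n k : nat) (f : alloc n k) (v : dvec k) (t i : 'I_k) : Prop :=
  exists a : 'I_n, forall s : 'I_k, s != i -> s != t -> 0 < v s ->
    forall v' : dvec k, st_adjacent s t v v' -> cost2_interm_by f s t i a v v'.

(* Main.v *)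
Require Import Defs.
From mathcomp Require Import all_boot zify.
Set Implicit Arguments. Unset Strict Implicit. Unset Printing Implicit Defensive.

Lemma st_adj_sum k (s t : 'I_k) (v w : dvec k) :
  st_adjacent s t v w -> \sum_(j < k) w j = \sum_(j < k) v j.
Proof.
move=> [st [vs [ws [wt oth]]]].
have ts : t != s by rewrite eq_sym.
rewrite (bigD1 s) // [X in _ = X](bigD1 s) //= (bigD1 t) //= [X in _ = _ + X](bigD1 t) //=.
rewrite (eq_bigr (fun j => v j)); last by move=> j /andP [H1 H2]; rewrite oth.
rewrite ws wt; move: vs; case: (v s) => // m _ /=; rewrite !addSn addnS.  done.
Qed.

Lemma st_adj_l1 k (s t : 'I_k) (v w : dvec k) :
  st_adjacent s t v w -> l1dist v w = 2.
Proof.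
move=> [st [vs [ws [wt oth]]]].
have ts : t != s by rewrite eq_sym.
rewrite /l1dist (bigD1 s) //= (bigD1 t) //=.
rewrite big1; last by move=> j /andP [H1 H2]; rewrite oth // maxnn minnn subnn.
rewrite ws wt; move: vs; case: (v s) => // m _ /=; lia.
Qed.

Lemma card_sum n k (f : alloc n k) (v : dvec k) (p : 'I_k) :
  #|[set a : 'I_n | f a v == p]| = \sum_(a < n) (f a v == p).
Proof.
rewrite -sum1dep_card big_mkcond /=; apply: eq_bigr => a _.
by case: (f a v == p).
Qed.
Lemma comb (T: eqType) (i t X0 X1 Y0 Y1 : T) : i != t -> X0 != X1 -> Y0 != Y1 ->
  (forall p, (X0==p)+(Y0==p)+(p==t) = (X1==p)+(Y1==p)+(p==i)) -> Y1 = t ->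
  [/\ X0 = i, X1 = Y0 & Y0 != i].
Proof.
move=> it x01 y01 H Y1t; subst Y1.
have ti : (t == i) = false by rewrite eq_sym; apply/negbTE.
have Y0t : (Y0 == t) = false by apply/negbTE.
have tY0 : (t == Y0) = false by rewrite eq_sym.
case: (eqVneq X0 i) => [X0i|X0i].
  subst X0.
  have X1i : (X1 == i) = false by rewrite eq_sym; apply/negbTE.
  have := H i; rewrite eqxx ti X1i /= => Hi.
  have Y0i : Y0 != i by apply/negP => /eqP E; rewrite E eqxx in Hi.
  split => //.
  have := H Y0; rewrite eqxx tY0 Y0t (negbTE Y0i) eq_sym (negbTE Y0i) /=.
  by case: (X1 =P Y0).
have := H X0; rewrite eqxx (eq_sym X1 X0) (negbTE x01) (negbTE X0i) /= (eq_sym t X0).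
by case: (Y0 == X0); case: (X0 == t).
Qed.

Lemma adj_demand n k (s t : 'I_k) (v w : dvec k) :
  st_adjacent s t v w -> is_demand n v -> is_demand n w.
Proof. by move=> H; rewrite /is_demand (st_adj_sum H). Qed.

Lemma struct2 n k (f : alloc n k) (v w : dvec k) (i t : 'I_k) :
  satisfies_demand f -> is_demand n v -> st_adjacent i t v w -> sw_cost f v w = 2 ->
  exists c d (j : 'I_k), [/\ j != i, j != t, f c v = i /\ f c w = j, f d v = j /\
    f d w = t & forall x, x != c -> x != d -> f x w = f x v].
Proof.
move=> sd dv adj sw.
have dw := adj_demand adj dv.
have /cards2P [x [y [xy HS]]] : #|[set a | f a v != f a w]| == 2 by rewrite -/(sw_cost f v w) sw.
have unch : forall z, z != x -> z != y -> f z w = f z v.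
  move=> z zx zy.
  have : z \notin [set a | f a v != f a w] by rewrite HS !inE negb_or zx zy.
  by rewrite inE negbK => /eqP.
have spl : forall (u : dvec k) p, \sum_(a < n) (f a u == p) =
    (f x u == p) + (f y u == p) + \sum_(a < n | (a != x) && (a != y)) (f a u == p).
  move=> u p; rewrite (bigD1 x) // (bigD1 y) 1?eq_sym //=; by rewrite addnA.
have Hid : forall p, (f x v == p) + (f y v == p) + (p == t) = (f x w == p) + (f y w == p) + (p == i).
  move=> p.
  have Ev := sd v dv p; have Ew := sd w dw p.
  rewrite card_sum spl in Ev; rewrite card_sum spl in Ew.
  have eqR : \sum_(a < n | (a != x) && (a != y)) (f a w == p) =
             \sum_(a < n | (a != x) && (a != y)) (f a v == p).
    by apply: eq_bigr => a /andP [ax ay]; rewrite unch.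
  rewrite eqR in Ew.
  case: adj => [it [vi [wi [wt oth]]]].
  case: (eqVneq p i) => [pi|pi].
    subst p; rewrite (negbTE (it : i != t)) wi in Ew *; lia.
  case: (eqVneq p t) => [pt|pt].
    subst p; rewrite ?eqxx wt in Ew *; lia.
  rewrite oth // in Ew; lia.
have inS : forall z, z \in [set x; y] -> f z v != f z w.
  by move=> z; rewrite -HS inE.
have x01 := inS x (set21 x y).
have y01 := inS y (set22 x y).
have it : i != t by case: adj.
have := Hid t; rewrite eqxx (eq_sym t i) (negbTE it).
case: (eqVneq (f y w) t) => [Yt|Yt] Ht.
  have [X0i X1Y0 Y0i] := comb it x01 y01 Hid Yt.
  exists x, y, (f y v); split => //; by rewrite -Yt.
case: (eqVneq (f x w) t) => [Xt|Xt]; last first.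
  by move: Ht; rewrite (negbTE Xt); case: (f x v == t); case: (f y v == t).
have Hid' : forall p, (f y v == p) + (f x v == p) + (p == t) = (f y w == p) + (f x w == p) + (p == i).
  by move=> p; rewrite (addnC (f y v == p)) (addnC (f y w == p)).
have [X0i X1Y0 Y0i] := comb it y01 x01 Hid' Xt.
exists y, x, (f x v); split => //; last by move=> z zy zx; rewrite unch.
by rewrite -X1Y0.
Qed.

Theorem lemma4p3 (n k : nat) (f : alloc n k) :
  4 <= n -> 5 <= k -> satisfies_demand f -> max_sw_cost_le f 2 ->
  forall (v : dvec k) (t i s1 s2 : 'I_k),
    is_demand n v ->
    type2_with f v t i ->
    s1 != s2 -> s1 != t -> s1 != i -> s2 != t -> s2 != i ->
    0 < v s1 -> 0 < v s2 ->
    forall v' : dvec k, st_adjacent i t v v' -> sw_cost f v v' = 1.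
Proof.
move=> _ _ sd mx v t i s1 s2 dv [a T2] s12 s1t s1i s2t s2i v1 v2 w adj.
have dw := adj_demand adj dv.
have le2 : sw_cost f v w <= 2 := mx v w dv dw (st_adj_l1 adj).
have [it [vi [wi [wt oth]]]] := adj.
have ge1 : 0 < sw_cost f v w.
  rewrite lt0n /sw_cost cards_eq0; apply/negP => /eqP E.
  have same : forall x, f x v = f x w.
    move=> x; have : x \in [set x | f x v != f x w] = false by rewrite E inE.
    by rewrite inE => /negbFE/eqP.
  have Ev := sd v dv t; have Ew := sd w dw t.
  have : [set x | f x v == t] = [set x | f x w == t].
    by apply/setP => x; rewrite !inE same.
  move=> EE; rewrite EE Ew wt in Ev.
  by move: Ev => /eqP; rewrite -{2}[v t]addn0 -addn1 eqn_add2l.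
have : sw_cost f v w = 2 -> False; last by move: le2 ge1; case: (sw_cost f v w) => [|[|[|]]].
move=> sw2.
have [c [d [j [ji jt [cv cw] [dv' dw'] unch]]]] := struct2 sd dv adj sw2.
have neqf : forall x y (p q : 'I_k), f x v = p -> f y v = q -> p != q -> x != y.
  by move=> x y p q <- <-; apply: contra_neq => ->.
have main : forall s, s != i -> s != t -> 0 < v s -> s != j -> False.
  move=> s si st vs sj.
  pose u : dvec k := [ffun p => if p == s then (v s).-1 else if p == t then (v t).+1 else v p].
  have ts : (t == s) = false by rewrite eq_sym; apply/negbTE.
  have adjsu : st_adjacent s t v u.
    split => //; split => //; split; first by rewrite ffunE eqxx.
    split; first by rewrite ffunE ts eqxx.
    by move=> p ps pt; rewrite ffunE (negbTE ps) (negbTE pt).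
  have du := adj_demand adjsu dv.
  have [swu [_ [_ [[b [bv [bu _]]] [av [au _]]]]]] := T2 s si st vs u adjsu.
  have ab : a != b by apply: (neqf _ _ i s) => //; rewrite eq_sym.
  have unchu : forall x, x != a -> x != b -> f x u = f x v.
    have HS : [set a; b] == [set x | f x v != f x u].
      rewrite eqEcard cards2 ab -/(sw_cost f v u) swu leqnn andbT.
      apply/subsetP => x; rewrite !inE => /orP [] /eqP ->.
        by rewrite av au it.
      by rewrite bv bu si.
    move=> x xa xb.
    have : x \notin [set x | f x v != f x u] by rewrite -(eqP HS) !inE negb_or xa xb.
    by rewrite inE negbK => /eqP.
  have adjwu : st_adjacent s i w u.
    split => //; split; first by rewrite oth.
    split; first by rewrite ffunE eqxx oth.
    split; first by rewrite ffunE (eq_sym i s) (negbTE si) (negbTE it) wi prednK.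
    move=> p ps pi; rewrite ffunE (negbTE ps).
    case: (eqVneq p t) => [->|pt]; first by rewrite wt.
    by rewrite oth.
  have := mx w u dw du (st_adj_l1 adjwu).
  set D := [set x | f x w != f x u].
  have bc : b != c by apply: (neqf _ _ s i).
  have bd : b != d by apply: (neqf _ _ s j).
  have cd : c != d by apply: (neqf _ _ i j) => //; rewrite eq_sym.
  have da : d != a by apply: (neqf _ _ j i).
  have bD : b \in D.
    rewrite inE bu unch; first by rewrite bv.
      by []. by [].
  have cD : c \in D.
    rewrite inE cw; case: (eqVneq c a) => [->|ca]; first by rewrite au.
    by rewrite unchu // ?cv // eq_sym.
  have dD : d \in D.
    by rewrite inE dw' unchu // ?dv' 1?eq_sym.
  rewrite /sw_cost -/D (cardsD1 d D) dD.
  have : [set b; c] \subset D :\ d.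
    apply/subsetP => x; rewrite !inE => /orP [] /eqP ->.
      by move: bD; rewrite bd inE.
    by move: cD; rewrite cd inE.
  move/subset_leq_card; rewrite cards2 bc.
  by case: #|D :\ d| => [|[|]].
case: (eqVneq j s1) => [js|js].
  apply: (main s2) => //; rewrite js; by rewrite eq_sym.
by apply: (main s1) => //; rewrite eq_sym.
Qed.
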